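(* Let $\{x^k\}$ be an infinite sequence generated by the MPG algorithm described in the context (i.e., the algorithm never stops), and suppose that for each $j=1,\ldots,m$ the gradient $\nabla G_j$ is Lipschitz continuous with constant $L_j>0$. Then there exists $c>0$ such that $$\theta_\alpha(x^k)\ge c\big(F_{j_k^*}(x^{k+1})-F_{j_k^*}(x^k)\big)\quad\text{for all } k\in\mathbb{N},$$ where $j_k^*\in\arg\max_{j=1,\ldots,m}\nabla G_j(x^k)^\top d^k$ is the index chosen in Step 3 of the algorithm.
   Context: Let $F:\mathbb{R}^n\to(\mathbb{R}\cup\{+\infty\})^m$, $F=(F_1,\ldots,F_m)$, with $F_j=G_j+H_j$ for $j=1,\ldots,m$, where: (i) each $G_j:\mathbb{R}^n\to\mathbb{R}$ is continuously differentiable and convex; (ii) each $H_j:\mathbb{R}^n\to\mathbb{R}\cup\{+\infty\}$ is proper, convex and continuous on its domain; (iii) $\mathrm{dom}(F):=\{x: F_j(x)<+\infty\ \forall j\}$ is nonempty and closed. For $u,v\in\mathbb{R}^m$, $u\preceq v$ means $u_j\le v_j$ for all $j$. For $x\in\mathrm{dom}(F)$ and $\alpha>0$ define $\psi_x(u):=\max_{j=1,\ldots,m}\big(\nabla G_j(x)^\top(u-x)+H_j(u)-H_j(x)\big)$, $p_\alpha(x):=\arg\min_{u\in\mathbb{R}^n}\psi_x(u)+\frac{1}{2\alpha}\|u-x\|^2$ (unique minimizer), and $\theta_\alpha(x):=\psi_x(p_\alpha(x))+\frac{1}{2\alpha}\|p_\alpha(x)-x\|^2$. MPG algorithm. Step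 0: choose $x^0\in\mathrm{dom}(F)$, $\alpha>0$, $\gamma\in(0,2/\alpha)$, $0<\tau_1<\tau_2<1$; set $k=0$. Step 1: compute $p^k:=p_\alpha(x^k)$ and $\theta_\alpha(x^k)$. Step 2: if $\theta_\alpha(x^k)=0$, stop. Step 3: set $d^k:=p^k-x^k$, take $j_k^*\in\arg\max_{j}\nabla G_j(x^k)^\top d^k$, set $t=1$. Step 3.1: if $G_{j_k^*}(x^k+td^k)\le G_{j_k^*}(x^k)+t\nabla G_{j_k^*}(x^k)^\top d^k+t\frac{\gamma}{2}\|d^k\|^2$, go to Step 3.2; otherwise replace $t$ by some value in $[\tau_1 t,\tau_2 t]$ and repeat Step 3.1. Step 3.2: if $F(x^k+td^k)\preceq F(x^k)$, set $t_k=t$ and go to Step 4. Step 3.3: replace $t$ by some value in $[\tau_1 t,\tau_2 t]$; if $G_j(x^k+td^k)\le G_j(x^k)+t\nabla G_j(x^k)^\top d^k+t\frac{\gamma}{2}\|d^k\|^2$ for all $j=1,\ldots,m$, set $t_k=t$ and go to Step 4; otherwise repeat Step 3.3. Step 4: $x^{k+1}:=x^k+t_kd^k$, $k\leftarrow k+1$, go to Step 1. *)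

(* Defs.v *)
From HB Require Import structures.
From mathcomp Require Import all_boot all_order all_algebra.
From mathcomp Require Import all_classical all_reals all_analysis.
Set Implicit Arguments. Unset Strict Implicit. Unset Printing Implicit Defensive.
Import Order.TTheory GRing.Theory Num.Theory.
Import numFieldNormedType.Exports.
Local Open Scope classical_set_scope.
Local Open Scope ring_scope.

Section MPG.
Variables (R : realType) (n m : nat).
Local Notation vec := 'rV[R]_n.

Definition dot (u v : vec) : R := \sum_(i < n) u 0 i * v 0 i.
Definition enorm (u : vec) : R := Num.sqrt (dot u u).

Definition convex_fun (f : vec -> R) : Prop :=
  forall (x y : vec) (l : R), 0 <= l <= 1 ->
    f (l *: x + (1 - l) *: y) <= l * f x + (1 - l) * f y.

Definition edom (h : vec -> \bar R) : set vec := [set x | (h x < +oo)%E].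

Definition proper_fun (h : vec -> \bar R) : Prop :=
  (forall x, h x != -oo%E) /\ (exists x, (h x < +oo)%E).

(* convexity of an extended-valued proper function (inequality on the
   domain; outside the domain the right-hand side is +oo) *)
Definition econvex_fun (h : vec -> \bar R) : Prop :=
  forall (x y : vec) (l : R), x \in edom h -> y \in edom h -> 0 <= l <= 1 ->
    (h (l *: x + (1 - l) *: y)%R <= (l * fine (h x) + (1 - l) * fine (h y))%:E)%E.

Definition cont_on_dom (h : vec -> \bar R) : Prop :=
  {within edom h, continuous (fun x => fine (h x))}.

Variables (G : 'I_m -> vec -> R) (gradG : 'I_m -> vec -> vec)
          (H : 'I_m -> vec -> \bar R).

Definition Fj (j : 'I_m) (x : vec) : \bar R := ((G j x)%:E + H j x)%E.

Definition domF : set vec := [set x | forall j, (Fj j x < +oo)%E].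

Definition Fle (y x : vec) : Prop := forall j, (Fj j y <= Fj j x)%E.

Definition psi (x u : vec) : \bar R :=
  (\big[Order.max/-oo]_(j < m)
     ((dot (gradG j x) (u - x)%R)%:E + H j u - H j x))%E.

Definition prox_obj (alpha : R) (x u : vec) : \bar R :=
  (psi x u + ((enorm (u - x)) ^+ 2 / (2 * alpha))%:E)%E.

(* p is the (unique) minimizer of the subproblem, i.e. p = p_alpha(x) *)
Definition is_p_alpha (alpha : R) (x p : vec) : Prop :=
  forall u, (prox_obj alpha x p <= prox_obj alpha x u)%E.

Definition theta (alpha : R) (x p : vec) : \bar R := prox_obj alpha x p.

Definition Gtest (gamma : R) (j : 'I_m) (x d : vec) (t : R) : Prop :=
  G j (x + t *: d) <= G j x + t * dot (gradG j x) d + t * (gamma / 2) * (enorm d) ^+ 2.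

(* Step 3 (3.1 - 3.3): t is the step size t_k produced by the backtracking
   procedure from x = x^k, direction d = d^k, chosen index j = j_k^*.
   s i is the i-th trial value of t (s 0 = 1, each replacement takes a value in
   [tau1 t, tau2 t]); i1 is the trial at which Step 3.1 exits; N the final one. *)
Definition MPG_step_size (gamma tau1 tau2 : R) (x d : vec) (j : 'I_m) (t : R)
  : Prop :=
  exists (s : nat -> R) (i1 N : nat),
    [/\ s 0%N = 1,
        (forall i, tau1 * s i <= s i.+1 <= tau2 * s i),
        (forall i, (i < i1)%N -> ~ Gtest gamma j x d (s i)) &
        Gtest gamma j x d (s i1)] /\
    [/\ (i1 <= N)%N,
        t = s N &
        ((N = i1 /\ Fle (x + s i1 *: d) x) \/
         [/\ (i1 < N)%N, ~ Fle (x + s i1 *: d) x,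
             (forall i, (i1 < i < N)%N -> ~ (forall j', Gtest gamma j' x d (s i))) &
             (forall j', Gtest gamma j' x d (s N))])].

End MPG.

(* Main.v *)
Require Import Defs.
From HB Require Import structures.
From mathcomp Require Import all_boot all_order all_algebra.
From mathcomp Require Import all_classical all_reals all_analysis.
From mathcomp Require Import ring lra.
Import Order.TTheory GRing.Theory Num.Theory.
Import numFieldNormedType.Exports.
Local Open Scope classical_set_scope.
Local Open Scope ring_scope.

Section H.
Variables (R : realType) (n : nat).
Local Notation vec := 'rV[R]_n.

Lemma vec_comb (x y : vec) (h : R) : h *: (x - y) + y = h *: x + (1 - h) *: y.
Proof. by rewrite scalerBr scalerBl scale1r -addrA (addrC (- _)). Qed.

Lemma grad_ineq (f : vec -> R) (y x : vec) :
  differentiable f y -> convex_fun f -> 'd f y (x - y) <= f x - f y.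
Proof.
move=> df cf; rewrite -deriveE //.
have cv : derivable f y (x - y) by apply: diff_derivable.
have sub : ((0:R)^'+ : set_system R) `=>` (0:R)^'.
  move=> P; rewrite /dnbhs /at_right /within /= => hP.
  apply: (filterS _ hP) => z Pz z0; apply: Pz; rewrite lt0r_neq0 //.
have cv' := cvg_trans (cvg_app _ sub) cv.
apply: (cvgr_to_le cv').
near=> h.
have h0 : 0 < h by near: h; exact: nbhs_right_gt.
have h1 : h < 1 by near: h; exact: nbhs_right_lt.
rewrite /= vec_comb ler_pdivrMl //.
have := cf x y h; rewrite (ltW h0) (ltW h1) => /(_ isT) H.
rewrite mulrBr; lra.
Unshelve. all: by end_near.
Qed.

Lemma dotDr (u v w : vec) : dot u (v + w) = dot u v + dot u w.
Proof. by rewrite /dot -big_split; apply: eq_bigr => i _; rewrite mxE mulrDr. Qed.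
Lemma dotZr (u v : vec) a : dot u (a *: v) = a * dot u v.
Proof. by rewrite /dot mulr_sumr; apply: eq_bigr => i _; rewrite mxE mulrCA. Qed.
Lemma dotNr (u v : vec) : dot u (- v) = - dot u v.
Proof. by rewrite -scaleN1r dotZr mulN1r. Qed.
Lemma dotBr (u v w : vec) : dot u (v - w) = dot u v - dot u w.
Proof. by rewrite dotDr dotNr. Qed.
Lemma dotC (u v : vec) : dot u v = dot v u.
Proof. by rewrite /dot; apply: eq_bigr => i _; rewrite mulrC. Qed.
Lemma dotDl (u v w : vec) : dot (v + w) u = dot v u + dot w u.
Proof. by rewrite dotC dotDr !(dotC u). Qed.
Lemma dotZl (u v : vec) a : dot (a *: v) u = a * dot v u.
Proof. by rewrite dotC dotZr dotC. Qed.
Lemma dotBl (u v w : vec) : dot (v - w) u = dot v u - dot w u.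
Proof. by rewrite dotC dotBr !(dotC u). Qed.
Lemma dot_ge0 (u : vec) : 0 <= dot u u.
Proof. by apply: sumr_ge0 => i _; rewrite -expr2 sqr_ge0. Qed.
Lemma enorm_sq (u : vec) : enorm u ^+ 2 = dot u u.
Proof. by rewrite /enorm sqr_sqrtr // dot_ge0. Qed.
Lemma enorm_ge0 (u : vec) : 0 <= enorm u.
Proof. exact: sqrtr_ge0. Qed.
Lemma enormZ_sq (u : vec) a : enorm (a *: u) ^+ 2 = a ^+ 2 * enorm u ^+ 2.
Proof. by rewrite !enorm_sq dotZl dotZr mulrA expr2. Qed.

Lemma dot_young (u v : vec) lam : 0 < lam ->
  2 * dot u v <= lam * dot u u + dot v v / lam.
Proof.
move=> l0; rewrite /dot mulr_sumr mulr_sumr mulr_suml -big_split /=.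
apply: ler_sum => i _.
have ->: u 0 i * u 0 i = (u 0 i) ^+ 2 by rewrite expr2.
rewrite -subr_ge0.
have -> : lam * u 0 i ^+ 2 + v 0 i * v 0 i / lam - 2 * (u 0 i * v 0 i)
   = (lam * u 0 i - v 0 i) ^+ 2 / lam.
  by field; rewrite gt_eqF.
by apply: divr_ge0; [exact: sqr_ge0 | exact: ltW].
Qed.

Lemma descent (f : vec -> R) (g : vec -> vec) (L : R) (y d : vec) (s : R) :
  0 < L -> 0 < s ->
  (forall z, differentiable f z /\ forall v, 'd f z v = dot (g z) v) ->
  convex_fun f ->
  (forall a b, enorm (g a - g b) <= L * enorm (a - b)) ->
  f (y + s *: d) <= f y + s * dot (g y) d + s * (L * s * dot d d).
Proof.
move=> L0 s0 hd cf hL.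
set z := y + s *: d.
have [dz gz] := hd z.
have h1 := @grad_ineq f z y dz cf.
rewrite gz in h1.
have yz : y - z = - (s *: d) by rewrite /z opprD addrA subrr add0r.
rewrite yz dotNr dotZr in h1.
set u := g z - g y.
have gze : g z = g y + u by rewrite /u addrC subrK.
rewrite gze dotDl in h1.
have hu := hL z y.
have zy : z - y = s *: d by rewrite /z addrC addKr.
rewrite zy -/u in hu.
have hu2 : dot u u <= L ^+ 2 * (s ^+ 2 * dot d d).
  rewrite -enorm_sq -enorm_sq -enormZ_sq -exprMn.
  rewrite ler_sqr ?nnegrE ?enorm_ge0 //; last by rewrite mulr_ge0 ?enorm_ge0 // ltW.
have Ls0 : 0 < L * s by rewrite mulr_gt0.
have hy := @dot_young u d (L * s)^-1 (ltac:(by rewrite invr_gt0)).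
rewrite invrK in hy.
have ha : (L * s)^-1 * dot u u <= L * s * dot d d.
  rewrite mulrC ler_pdivrMr //.
  by apply: (le_trans hu2); rewrite le_eqVlt; apply/orP; left; apply/eqP; ring.
have hc : dot u d <= L * s * dot d d by lra.
have hsc : s * dot u d <= s * (L * s * dot d d) by rewrite ler_pM2l.
rewrite /z; lra.
Qed.

Lemma dot0r (u : vec) : dot u 0 = 0.
Proof. by rewrite -(subrr u) dotBr subrr. Qed.
Lemma dot0l (u : vec) : dot 0 u = 0.
Proof. by rewrite dotC dot0r. Qed.
End H.

Section E.
Variables (R : realType) (n m : nat) (gradG : 'I_m -> 'rV[R]_n -> 'rV[R]_n)
  (H : 'I_m -> 'rV[R]_n -> \bar R).
Local Notation vec := 'rV[R]_n.
Local Open Scope ereal_scope.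

Definition term (x u : vec) j :=
  ((dot (gradG j x) (u - x))%:E + H j u - H j x)%E.

Lemma psiE x u : psi gradG H x u = \big[Order.max/-oo]_j term x u j.
Proof. by []. Qed.

Lemma term_le_psi x u j : term x u j <= psi gradG H x u.
Proof. by rewrite psiE; apply: le_bigmax. Qed.

Lemma psi_le x u b : (forall j, term x u j <= b) -> psi gradG H x u <= b.
Proof. by move=> hb; rewrite psiE; apply: bigmax_le => //; rewrite leNye. Qed.

Lemma term_fin x u j : H j x \is a fin_num -> H j u \is a fin_num ->
  term x u j = (dot (gradG j x) (u - x) + fine (H j u) - fine (H j x))%:E.
Proof. by move=> hx hu; rewrite /term -(fineK hx) -(fineK hu) /=. Qed.

Lemma psi_xx x (j0 : 'I_m) : (forall j, H j x \is a fin_num) -> psi gradG H x x = 0.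
Proof.
move=> hx; apply/eqP; rewrite eq_le; apply/andP; split.
  apply: psi_le => j; rewrite term_fin // subrr dot0r add0r subrr //.
by have := term_le_psi x x j0; rewrite term_fin // subrr dot0r add0r subrr.
Qed.

Lemma enorm0 : enorm (0 : vec) = 0%R.
Proof. by rewrite /enorm dot0r sqrtr0. Qed.

Lemma prox_xx alpha x (j0 : 'I_m) : (forall j, H j x \is a fin_num) ->
  prox_obj gradG H alpha x x = 0.
Proof. by move=> hx; rewrite /prox_obj (psi_xx x j0 hx) subrr enorm0 expr0n /= mul0r adde0. Qed.

Lemma psi_p_le0 alpha x p (j0 : 'I_m) : (0 < alpha)%R ->
  (forall j, H j x \is a fin_num) -> is_p_alpha gradG H alpha x p ->
  psi gradG H x p <= 0.
Proof.
move=> a0 hx hp; have := hp x; rewrite (prox_xx alpha x j0 hx) /prox_obj.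
apply: le_trans; apply: leeDl; rewrite lee_fin.
by apply: divr_ge0; [exact: sqr_ge0 | rewrite mulr_ge0 // ltW].
Qed.

Lemma p_fin alpha x p (j0 : 'I_m) : (0 < alpha)%R ->
  (forall j, proper_fun (H j)) ->
  (forall j, H j x \is a fin_num) -> is_p_alpha gradG H alpha x p ->
  forall j, H j p \is a fin_num.
Proof.
move=> a0 hpr hx hp j; have := psi_p_le0 alpha x p j0 a0 hx hp.
have := term_le_psi x p j; rewrite /term.
move=> h1 h2; rewrite fin_numE (proj1 (hpr j) p) /=; apply/negP => /eqP E.
move: h1; rewrite E -(fineK (hx j)) /= => h1.
by have := le_trans h1 h2.
Qed.

Lemma conv_fin j x p (l : R) : (forall j, proper_fun (H j)) ->
  (forall j, econvex_fun (H j)) ->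
  H j x \is a fin_num -> H j p \is a fin_num -> (0 <= l <= 1)%R ->
  H j (x + l *: (p - x))%R \is a fin_num /\
  (fine (H j (x + l *: (p - x))%R) <= l * fine (H j p) + (1 - l) * fine (H j x))%R.
Proof.
move=> hpr hcv hx hp hl.
have := hcv j p x l.
have e : (x + l *: (p - x))%R = (l *: p + (1 - l) *: x)%R by rewrite addrC vec_comb.
rewrite -e.
have mp : p \in edom (H j) by apply: mem_set; rewrite /edom /=; move: hp; rewrite fin_numElt => /andP[].
have mx : x \in edom (H j) by apply: mem_set; rewrite /edom /=; move: hx; rewrite fin_numElt => /andP[].
move=> /(_ mp mx hl) hle.
have hf : H j (x + l *: (p - x))%R \is a fin_num.
  rewrite fin_numE (proj1 (hpr j)) /=; apply/negP => /eqP E.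
  by move: hle; rewrite E.
split=> //; by rewrite -lee_fin fineK.
Qed.

Lemma psi_conv x p (l P : R) : (forall j, proper_fun (H j)) ->
  (forall j, econvex_fun (H j)) ->
  (forall j, H j x \is a fin_num) -> (forall j, H j p \is a fin_num) -> (0 <= l <= 1)%R ->
  psi gradG H x p <= P%:E ->
  psi gradG H x (x + l *: (p - x))%R <= (l * P)%:E.
Proof.
move=> hpr hcv hx hp hl hP; apply: psi_le => j.
have [hf hle] := conv_fin j x p l hpr hcv (hx j) (hp j) hl.
have := le_trans (term_le_psi x p j) hP.
rewrite !term_fin // !lee_fin (addrC x) addrK dotZr => ht.
have l0 : (0 <= l)%R by case/andP: hl.
rewrite (addrC x) mulrBl mul1r in hle.
have := ler_wpM2l l0 ht; rewrite !mulrDr !mulrN; lra.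
Qed.
End E.

Section S.
Variable R : realType.

Lemma s_range (s : nat -> R) tau1 tau2 : s 0%N = 1 -> 0 < tau1 -> tau2 <= 1 ->
  (forall i, tau1 * s i <= s i.+1 <= tau2 * s i) -> forall i, 0 < s i <= 1.
Proof.
move=> s0 t1 t2 hs; elim=> [|i /andP[h0 h1]]; first by rewrite s0 ltr01 lexx.
have /andP[a b] := hs i.
apply/andP; split; first by apply: lt_le_trans a; rewrite mulr_gt0.
by apply: (le_trans b); nra.
Qed.

Lemma step_lb (T Tall : R -> Prop) b tau1 tau2 (s : nat -> R) i1 N :
 0 < b -> b <= 1 -> 0 < tau1 -> tau1 <= 1 -> tau2 <= 1 ->
 (forall r, 0 < r -> r <= b -> T r) -> (forall r, 0 < r -> r <= b -> Tall r) ->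
 s 0%N = 1 -> (forall i, tau1 * s i <= s i.+1 <= tau2 * s i) ->
 (forall i, (i < i1)%N -> ~ T (s i)) ->
 (N = i1 \/ ((i1 < N)%N /\ forall i, (i1 < i < N)%N -> ~ Tall (s i))) ->
 tau1 * tau1 * b <= s N.
Proof.
move=> b0 b1 t0 t1 t2 hT hTa s0 hs hf hN.
have sr := s_range s tau1 tau2 s0 t0 t2 hs.
have fail : forall r, 0 < r -> ~ T r -> b < r.
  by move=> r r0 nT; rewrite ltNge; apply/negP => rb; exact: nT (hT r r0 rb).
have faila : forall r, 0 < r -> ~ Tall r -> b < r.
  by move=> r r0 nT; rewrite ltNge; apply/negP => rb; exact: nT (hTa r r0 rb).
have tb : tau1 * b <= b by rewrite ler_piMl // ltW.
have si1 : tau1 * b <= s i1.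
  case: i1 hf hN => [|k] hf hN; first by rewrite s0; nra.
  have /andP[k0 _] := sr k.
  have := fail _ k0 (hf k (ltnSn k)).
  have /andP[a _] := hs k; nra.
have ttb : tau1 * tau1 * b <= tau1 * b by rewrite -mulrA; rewrite ler_piMl // mulr_ge0 // ltW.
case: hN => [->|[lt hf2]]; first by apply: le_trans ttb si1.
case: N lt hf2 => [//|N'] lt hf2.
have /andP[a _] := hs N'.
have /andP[n0 _] := sr N'.
case: (ltngtP i1 N') => h.
- have := faila _ n0 (hf2 N' (ltac:(by rewrite h ltnSn))); nra.
- by move: lt; rewrite ltnS leqNgt h.
- subst; nra.
Qed.
End S.

Theorem mainTheorem6 (R : realType) (n m : nat)
  (G : 'I_m -> 'rV[R]_n -> R) (gradG : 'I_m -> 'rV[R]_n -> 'rV[R]_n)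
  (H : 'I_m -> 'rV[R]_n -> \bar R) (L : 'I_m -> R)
  (alpha gamma tau1 tau2 : R)
  (x p : nat -> 'rV[R]_n) (jstar : nat -> 'I_m) (t : nat -> R) :
  (0 < m)%N ->
  (* (i) G_j continuously differentiable with gradient gradG_j, and convex *)
  (forall j (y : 'rV[R]_n), differentiable (G j) y /\
     (forall v, 'd (G j) y v = dot (gradG j y) v)) ->
  (forall j, continuous (gradG j)) ->
  (forall j, convex_fun (G j)) ->
  (* (ii) H_j proper, convex, continuous on its domain *)
  (forall j, proper_fun (H j)) ->
  (forall j, econvex_fun (H j)) ->
  (forall j, cont_on_dom (H j)) ->
  (* (iii) dom F nonempty and closed *)
  domF G H !=set0 -> closed (domF G H) ->
  (* Lipschitz gradients *)
  (forall j, 0 < L j) ->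
  (forall j (y z : 'rV[R]_n),
     enorm (gradG j y - gradG j z) <= L j * enorm (y - z)) ->
  (* parameters of Step 0 *)
  0 < alpha -> 0 < gamma -> gamma < 2 / alpha ->
  0 < tau1 -> tau1 < tau2 -> tau2 < 1 ->
  x 0%N \in domF G H ->
  (* the MPG iteration *)
  (forall k, is_p_alpha gradG H alpha (x k) (p k)) ->
  (forall k, theta gradG H alpha (x k) (p k) != 0%E) ->
  (forall k j, dot (gradG j (x k)) (p k - x k)
               <= dot (gradG (jstar k) (x k)) (p k - x k)) ->
  (forall k, MPG_step_size G gradG H gamma tau1 tau2 (x k) (p k - x k)
               (jstar k) (t k)) ->
  (forall k, x k.+1 = x k + t k *: (p k - x k)) ->
  exists c : R, 0 < c /\
    forall k, (c%:E * (Fj G H (jstar k) (x k.+1) - Fj G H (jstar k) (x k))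
               <= theta gradG H alpha (x k) (p k))%E.
Proof.
move=> m0 hdiff _ hGc hpr hcv _ _ _ L0 hL a0 g0 ga t0 t12 t2 x0dom hp _ _ hstep hx.
set j0 := jstar 0%N.
set Lm := \big[Order.max/0]_j L j.
have LLm : forall j, L j <= Lm by move=> j; apply: le_bigmax.
have Lm0 : 0 < Lm by apply: lt_le_trans (L0 j0) (LLm j0).
set b := gamma / (2 * Lm + gamma).
have den0 : 0 < 2 * Lm + gamma by rewrite addr_gt0 // mulr_gt0.
have b0 : 0 < b by rewrite divr_gt0.
have b1 : b <= 1 by rewrite ler_pdivrMr // mul1r lerDr mulr_ge0 // ltW.
have bL : b * Lm <= gamma / 2.
  rewrite /b mulrAC ler_pdivrMr // mulrAC ler_pdivlMr //; nra.
have gtest : forall j y d r, 0 < r -> r <= b -> Gtest G gradG gamma j y d r.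
  move=> j y d r r0 rb; rewrite /Gtest.
  have := @descent R n (G j) (gradG j) (L j) y d r (L0 j) r0 (hdiff j) (hGc j) (hL j).
  move/le_trans; apply; rewrite enorm_sq -mulrA lerD2l -mulrA.
  apply: ler_wpM2l; first exact: ltW.
  rewrite mulrA; apply: ler_wpM2r; first exact: dot_ge0.
  have : L j * r <= Lm * b by rewrite ler_pM // ltW.
  by rewrite mulrC (mulrC Lm) => h; apply: le_trans h bL.
have t1le : tau1 <= 1 by apply: ltW; apply: lt_trans t12 t2.
have stepk : forall k, [/\ 0 < t k <= 1, tau1 * tau1 * b <= t k &
    Gtest G gradG gamma (jstar k) (x k) (p k - x k) (t k)].
  move=> k; have [s [i1 [N [[s0 hs hn hT] [hiN -> hc]]]]] := hstep k.
  have sr := s_range R s tau1 tau2 s0 t0 (ltW t2) hs.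
  split; first exact: sr N.
  - apply: (step_lb R (Gtest G gradG gamma (jstar k) (x k) (p k - x k))
      (fun r => forall j', Gtest G gradG gamma j' (x k) (p k - x k) r)
      b tau1 tau2 s i1 N b0 b1 t0 t1le (ltW t2)) => //.
    + by move=> r r0 rb; apply: gtest.
    + by move=> r r0 rb j'; apply: gtest.
    + by case: hc => [[-> _]|[lt _ hf2 _]]; [left | right].
  - by case: hc => [[-> _]|[_ _ _ h]]; [exact: hT | exact: h].
have domx : forall k j, H j (x k) \is a fin_num.
  elim=> [|k IH] j.
    move/set_mem: x0dom => /(_ j); rewrite /Fj.
    rewrite fin_numE (proj1 (hpr j)) /= => hlt; apply/negP => /eqP E; move: hlt; rewrite E //.
  have hpf := p_fin R n m gradG H alpha (x k) (p k) j0 a0 hpr IH (hp k).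
  have [/andP[tk0 tk1] _ _] := stepk k.
  rewrite hx; exact: (conv_fin R n m H j (x k) (p k) (t k) hpr hcv (IH j) (hpf j) (ltac:(by rewrite ltW))).1.
have ga2 : gamma * alpha < 2 by move: ga; rewrite -(ltr_pM2r a0) divfK // gt_eqF.
set lam := gamma * alpha / 2.
have lam0 : 0 <= lam by rewrite divr_ge0 // mulr_ge0 // ltW.
have lam1 : lam < 1 by rewrite /lam ltr_pdivrMr // mul1r.
set kap := 1 - lam.
have kap0 : 0 < kap by rewrite subr_gt0.
set tmin := tau1 * tau1 * b.
have tmin0 : 0 < tmin by apply: mulr_gt0 => //; apply: mulr_gt0.
exists (tmin * kap)^-1; split; first by rewrite invr_gt0; apply: mulr_gt0.
move=> k.
set xk := x k; set pk := p k; set d := pk - xk; set j := jstar k; set tk := t k.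
have hfx := domx k.
have hfp := p_fin R n m gradG H alpha xk pk j0 a0 hpr hfx (hp k).
have [/andP[tk0 tk1] tkmin hG] := stepk k.
have hle0 := psi_p_le0 R n m gradG H alpha xk pk j0 a0 hfx (hp k).
have hterm := term_le_psi R n m gradG H xk pk j.
rewrite (term_fin R n m gradG H xk pk j (hfx j) (hfp j)) in hterm.
have psifin : psi gradG H xk pk \is a fin_num.
  rewrite fin_numElt; apply/andP; split.
    by apply: lt_le_trans hterm; rewrite ltNye.
  by apply: le_lt_trans hle0 _; rewrite ltey.
set P := fine (psi gradG H xk pk).
have hPe : psi gradG H xk pk = P%:E by rewrite fineK.
rewrite hPe lee_fin in hterm.
have [hf1 hconv] := conv_fin R n m H j xk pk tk hpr hcv (hfx j) (hfp j) (ltac:(by rewrite ltW)).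
have hpsiu := psi_conv R n m gradG H xk pk lam P hpr hcv hfx hfp (ltac:(by rewrite lam0 ltW)) (ltac:(by rewrite hPe)).
have hprox := hp k (xk + lam *: (pk - xk)).
have eu : xk + lam *: (pk - xk) - xk = lam *: (pk - xk) by rewrite addrAC subrr add0r.
rewrite /prox_obj eu enormZ_sq hPe in hprox.
have hprox2 := le_trans hprox (leeD2r _ hpsiu).
rewrite -!EFinD lee_fin in hprox2.
set D := enorm d ^+ 2.
have D0 : 0 <= D by rewrite sqr_ge0.
set E := D / (2 * alpha).
have E0 : 0 <= E by rewrite divr_ge0 // mulr_ge0 // ltW.
have hE : lam ^+ 2 * D / (2 * alpha) = lam ^+ 2 * E by rewrite /E mulrA.
rewrite -/D hE in hprox2.
have hPb : P <= - (1 + lam) * E.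
  have e : (1 - lam) * (P + (1 + lam) * E) = (P + E) - (lam * P + lam ^+ 2 * E) by ring.
  have : (1 - lam) * (P + (1 + lam) * E) <= 0 by rewrite e subr_le0.
  rewrite pmulr_rle0 ?subr_gt0 //; lra.
have hgD : gamma / 2 * D = 2 * lam * E.
  rewrite /lam /E; field; rewrite gt_eqF //.
have hlP := ler_wpM2l lam0 hPb.
have hsq : 0 <= (1 - lam) ^+ 2 * E by rewrite mulr_ge0 // sqr_ge0.
have hk : P + gamma / 2 * D <= kap * (P + E).
  rewrite hgD /kap; move: hlP hsq; rewrite !mulNr !mulrDl !mulrDr !mul1r; nra.
have hth : P + E <= 0.
  have : lam * E >= 0 by rewrite mulr_ge0.
  move: hPb; rewrite mulNr mulrDl mul1r; lra.
rewrite /theta /prox_obj hPe /Fj hx -/xk -/pk -/tk -/j.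
rewrite -(fineK hf1) -(fineK (hfx j)) -/D -!EFinD -EFinM lee_fin -/xk.
rewrite /Gtest -/d in hG.
set h1 := fine _ in hconv *.
have htP := ler_wpM2l (ltW tk0) hterm.
have hDelta : G j (xk + tk *: d) + h1 - (G j xk + fine (H j xk)) <= tk * (P + gamma / 2 * D).
  move: htP hconv hG; rewrite -/xk -/j -/tk -/d -/D !mulrDr !mulrN !mulrBl !mul1r -(mulrA tk (gamma / 2) D); lra.
have h2 : tk * (P + gamma / 2 * D) <= tk * (kap * (P + E)) by rewrite ler_wpM2l // ltW.
have h3 : tk * (kap * (P + E)) <= tmin * (kap * (P + E)).
  have kt : kap * (P + E) <= 0 by rewrite pmulr_rle0.
  rewrite -subr_ge0 -mulrBl; apply: mulr_le0 => //.
  by rewrite subr_le0.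
have cpos : 0 <= (tmin * kap)^-1 by rewrite invr_ge0 ltW //; apply: mulr_gt0.
have := ler_wpM2l cpos (le_trans hDelta (le_trans h2 h3)).
have e : (tmin * kap)^-1 * (tmin * (kap * (P + E))) = P + E.
  by field; rewrite !gt_eqF.
by rewrite e.
Qed.
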